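(* Let $H\in(1/2,1)$, $\vartheta>0$ and let $S^H$ be a sub-fractional Brownian motion. There is a constant $C_{\vartheta,H}$ depending only on $\vartheta$ and $H$ such that for all $0\le s,t\le T$ with $s\ne t$, $$\mathbf E\Big[\int_s^T e^{-\vartheta(x-s)}dS^H_x\int_t^T e^{-\vartheta(y-t)}dS^H_y\Big]\le C_{\vartheta,H}|t-s|^{2H-2}$$ and $$\mathbf E\Big[\int_0^t e^{-\vartheta(t-u)}dS^H_u\int_0^s e^{-\vartheta(s-v)}dS^H_v\Big]\le C_{\vartheta,H}|t-s|^{2H-2}.$$
   Context: A sub-fractional Brownian motion $S^H$ is a centered Gaussian process with $S^H_0=0$ and covariance $\mathbf E(S^H_tS^H_s)=t^{2H}+s^{2H}-\frac12(|t-s|^{2H}+(t+s)^{2H})$. The integrals of deterministic functions with respect to $S^H$ are Wiener integrals, with $\mathbf E\int f\,dS^H\int g\,dS^H=\iint f(u)g(v)H(2H-1)(|u-v|^{2H-2}-(u+v)^{2H-2})\,du\,dv$. *)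

(* Defs.v *)
From Stdlib Require Import Reals.
Open Scope R_scope.

(* Covariance kernel of sub-fractional Brownian motion:
   phi_H(u,v) = H(2H-1)(|u-v|^{2H-2} - (u+v)^{2H-2}),
   set to 0 on the (Lebesgue-null) diagonal where it is singular. *)
Definition sfbm_kernel (H u v : R) : R :=
  if Req_EM_T u v then 0
  else H * (2 * H - 1) * (Rpower (Rabs (u - v)) (2 * H - 2) - Rpower (u + v) (2 * H - 2)).

Fixpoint rsum (n : nat) (f : nat -> R) : R :=
  match n with O => 0 | S k => rsum k f + f k end.

Definition grid_lower_sums (F : R -> R -> R) (a b c d : R) (z : R) : Prop :=
  exists (n : nat) (m : nat -> nat -> R),
    (0 < n)%nat /\
    (forall (i j : nat) (x y : R), (i < n)%nat -> (j < n)%nat ->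
       a + INR i * ((b - a) / INR n) <= x <= a + INR (S i) * ((b - a) / INR n) ->
       c + INR j * ((d - c) / INR n) <= y <= c + INR (S j) * ((d - c) / INR n) ->
       m i j <= F x y) /\
    z = rsum n (fun i => rsum n (fun j => m i j * ((b - a) / INR n) * ((d - c) / INR n))).

(* Integral of a NONNEGATIVE function over [a,b]x[c,d] (a<=b, c<=d): the supremum
   of lower sums; for nonnegative integrands continuous off a null set this is the
   (finite, when it exists) Lebesgue integral. *)
Definition is_double_integral_nonneg (F : R -> R -> R) (a b c d I : R) : Prop :=
  is_lub (grid_lower_sums F a b c d) I.

(* I = E[ int_a^b f dS^H  *  int_c^d g dS^H ]  (Wiener integrals, f,g >= 0),
   via  E = iint f(u) g(v) H(2H-1)(|u-v|^{2H-2} - (u+v)^{2H-2}) du dv. *)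
Definition sfbm_wiener_cov (H : R) (f : R -> R) (a b : R) (g : R -> R) (c d : R) (I : R) : Prop :=
  is_double_integral_nonneg (fun u v => f u * g v * sfbm_kernel H u v) a b c d I.

(* Main.v *)
Require Import Defs.
From Stdlib Require Import Reals Lra Lia.
From Coquelicot Require Import Coquelicot.
Open Scope R_scope.


Lemma rsum_le n f g : (forall k, (k < n)%nat -> f k <= g k) -> rsum n f <= rsum n g.
Proof.
  induction n; simpl; intros Hk; [lra|].
  assert (rsum n f <= rsum n g) by (apply IHn; intros; apply Hk; lia).
  assert (f n <= g n) by (apply Hk; lia). lra.
Qed.

Lemma rsum_tele n (u : nat -> R) : rsum n (fun k => u (S k) - u k) = u n - u O.
Proof. induction n; simpl; [ring| rewrite IHn; ring]. Qed.

Lemma rsum_scal n c f : rsum n (fun k => c * f k) = c * rsum n f.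
Proof. induction n; simpl; [ring| rewrite IHn; ring]. Qed.

Lemma rsum_zero n f : (forall k, f k = 0) -> rsum n f = 0.
Proof. induction n; simpl; intros; [ring| rewrite IHn, H; auto; ring]. Qed.

Lemma grid_ub (F : R -> R -> R) (a b c d B : R) :
  a <= b -> c <= d -> 0 <= B ->
  (forall hx hy, 0 < hx -> 0 < hy -> exists (P : R -> R -> R) (Q : R -> R),
     (forall x1 y1 mu, a <= x1 -> x1 + hx <= b -> c <= y1 -> y1 + hy <= d ->
        (forall x y, x1 <= x <= x1 + hx -> y1 <= y <= y1 + hy -> mu <= F x y) ->
        mu * hy <= P x1 (y1 + hy) - P x1 y1) /\
     (forall x1, a <= x1 -> x1 + hx <= b -> hx * (P x1 d - P x1 c) <= Q (x1 + hx) - Q x1) /\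
     Q b - Q a <= B) ->
  forall z, grid_lower_sums F a b c d z -> z <= B.
Proof.
  intros hab hcd hB HPQ z [n [m [hn [hm hz]]]].
  assert (hN : 0 < INR n) by (apply lt_0_INR; lia).
  set (hx := (b - a) / INR n) in *.
  set (hy := (d - c) / INR n) in *.
  assert (hx0 : 0 <= hx) by (unfold hx; apply Rmult_le_pos; [lra| left; apply Rinv_0_lt_compat; lra]).
  assert (hy0 : 0 <= hy) by (unfold hy; apply Rmult_le_pos; [lra| left; apply Rinv_0_lt_compat; lra]).
  assert (Hxn : INR n * hx = b - a) by (unfold hx; field; lra).
  assert (Hyn : INR n * hy = d - c) by (unfold hy; field; lra).
  destruct (Req_dec hx 0) as [E|E].
  { subst z. rewrite rsum_zero; [lra|]. intros i. apply rsum_zero. intros j. rewrite E. ring. }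
  destruct (Req_dec hy 0) as [E'|E'].
  { subst z. rewrite rsum_zero; [lra|]. intros i. apply rsum_zero. intros j. rewrite E'. ring. }
  destruct (HPQ hx hy) as [P [Q [HA [HB HQ]]]]; try lra.
  subst z.
  assert (Hi : forall i, (i < n)%nat ->
     rsum n (fun j => m i j * hx * hy) <= Q (a + INR (S i) * hx) - Q (a + INR i * hx)).
  { intros i hi.
    assert (Hx1 : a <= a + INR i * hx) by (pose proof (pos_INR i); nra).
    assert (Hx2 : a + INR i * hx + hx <= b).
    { assert (INR (S i) <= INR n) by (apply le_INR; lia). rewrite S_INR in H. nra. }
    eapply Rle_trans.
    2:{ rewrite S_INR. replace (a + (INR i + 1) * hx) with (a + INR i * hx + hx) by ring.
        apply HB; auto. }
    eapply Rle_trans with (rsum n (fun j => hx * (P (a + INR i * hx) (c + INR (S j) * hy)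
                               - P (a + INR i * hx) (c + INR j * hy)))).
    - apply rsum_le. intros j hj.
      replace (m i j * hx * hy) with (hx * (m i j * hy)) by ring.
      apply Rmult_le_compat_l; auto.
      rewrite S_INR. replace (c + (INR j + 1) * hy) with (c + INR j * hy + hy) by ring.
      assert (Hy1 : c <= c + INR j * hy) by (pose proof (pos_INR j); nra).
      assert (Hy2 : c + INR j * hy + hy <= d).
      { assert (INR (S j) <= INR n) by (apply le_INR; lia). rewrite S_INR in H. nra. }
      apply HA; auto.
      intros x y Hx Hy. apply hm; auto.
      + rewrite S_INR. lra.
      + rewrite S_INR. lra.
    - rewrite rsum_scal.
      rewrite (rsum_tele n (fun k => P (a + INR i * hx) (c + INR k * hy))).
      simpl INR. replace (c + INR n * hy) with d by lra. replace (c + 0 * hy) with c by ring. lra. }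
  eapply Rle_trans. apply rsum_le. exact Hi.
  rewrite (rsum_tele n (fun k => Q (a + INR k * hx))).
  replace (a + INR n * hx) with b by lra. simpl INR. replace (a + 0 * hx) with a by ring. exact HQ.
Qed.
Definition ex (L z0 y : R) := exp (- L * (y - z0)).
Definition Eprim (L z0 y : R) := - ex L z0 y / L.

Lemma ex_pos L z0 y : 0 < ex L z0 y.
Proof. apply exp_pos. Qed.

Lemma Eprim_derive L z0 y : L <> 0 -> is_derive (Eprim L z0) y (ex L z0 y).
Proof.
  intros hL. unfold Eprim, ex. auto_derive; auto. unfold Rminus. field; auto.
Qed.

Lemma Eprim_step_pos L z0 x h : 0 < L -> 0 <= h ->
  h * ex L z0 (x + h) <= Eprim L z0 (x + h) - Eprim L z0 x.
Proof.
  intros hL hh. unfold Eprim, ex.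
  replace (exp (- L * (x - z0))) with (exp (- L * (x + h - z0)) * exp (L * h))
    by (rewrite <- exp_plus; f_equal; ring).
  assert (1 + L * h <= exp (L * h)).
  { destruct (Req_dec (L*h) 0) as [E|E]. rewrite E, exp_0; lra. left; apply exp_ineq1; auto. }
  pose proof (exp_pos (- L * (x + h - z0))).
  apply (Rmult_le_reg_r L); auto.
  replace ((- exp (- L * (x + h - z0)) / L - - (exp (- L * (x + h - z0)) * exp (L * h)) / L) * L)
    with (exp (- L * (x + h - z0)) * (exp (L * h) - 1)) by (field; lra).
  nra.
Qed.

Lemma Eprim_step_neg L z0 x h : L < 0 -> 0 <= h ->
  h * ex L z0 x <= Eprim L z0 (x + h) - Eprim L z0 x.
Proof.
  intros hL hh. unfold Eprim, ex.
  replace (exp (- L * (x + h - z0))) with (exp (- L * (x - z0)) * exp (- L * h))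
    by (rewrite <- exp_plus; f_equal; ring).
  assert (1 + - L * h <= exp (- L * h)).
  { destruct (Req_dec (-L*h) 0) as [E|E]. rewrite E, exp_0; lra. left; apply exp_ineq1; auto. }
  pose proof (exp_pos (- L * (x - z0))).
  apply (Rmult_le_reg_r (-L)); [lra|].
  replace ((- (exp (- L * (x - z0)) * exp (- L * h)) / L - - exp (- L * (x - z0)) / L) * - L)
    with (exp (- L * (x - z0)) * (exp (- L * h) - 1)) by (field; lra).
  nra.
Qed.

Lemma ex_mono_pos L z0 y1 y2 : 0 < L -> y1 <= y2 -> ex L z0 y2 <= ex L z0 y1.
Proof.
  intros. unfold ex. destruct (Req_dec y1 y2). subst; lra.
  left; apply exp_increasing. nra.
Qed.

Lemma ex_mono_neg L z0 y1 y2 : L < 0 -> y1 <= y2 -> ex L z0 y1 <= ex L z0 y2.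
Proof.
  intros. unfold ex. destruct (Req_dec y1 y2). subst; lra.
  left; apply exp_increasing. nra.
Qed.

Lemma Eprim_mono L z0 y1 y2 : L <> 0 -> y1 <= y2 -> Eprim L z0 y1 <= Eprim L z0 y2.
Proof.
  intros hL hy. unfold Eprim. destruct (Rlt_dec 0 L).
  - pose proof (ex_mono_pos L z0 y1 y2 r hy).
    apply (Rmult_le_reg_r L); auto. field_simplify; lra.
  - assert (L < 0) by lra. pose proof (ex_mono_neg L z0 y1 y2 H hy).
    apply (Rmult_le_reg_r (-L)); [lra|].
    replace (- ex L z0 y1 / L * - L) with (ex L z0 y1) by (field; lra).
    replace (- ex L z0 y2 / L * - L) with (ex L z0 y2) by (field; lra). lra.
Qed.

Lemma Eprim_total L z0 y1 y2 : L <> 0 -> ex L z0 y1 <= 1 -> ex L z0 y2 <= 1 ->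
  Eprim L z0 y2 - Eprim L z0 y1 <= 1 / Rabs L.
Proof.
  intros hL h1 h2. pose proof (ex_pos L z0 y1). pose proof (ex_pos L z0 y2).
  unfold Eprim. destruct (Rlt_dec 0 L).
  - rewrite Rabs_right by lra. apply (Rmult_le_reg_r L); auto. field_simplify; lra.
  - rewrite Rabs_left by lra. apply (Rmult_le_reg_r (-L)); [lra|].
    replace ((- ex L z0 y2 / L - - ex L z0 y1 / L) * - L) with (ex L z0 y2 - ex L z0 y1) by (field; lra).
    replace (1 / - L * - L) with 1 by (field; lra). lra.
Qed.

Definition U (p z : R) := exp (p * ln (z / (1 + z))) / p.
Definition U' (p z : R) := exp (p * ln (z / (1 + z))) / (z * (1 + z)).
Definition V (p z : R) := if Rlt_dec 0 z then U p z else if Rlt_dec z 0 then - U p (- z) else 0.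

Lemma exp_lt1 x : x < 0 -> exp x < 1.
Proof. intros. pose proof (exp_increasing x 0 H). rewrite exp_0 in H0. auto. Qed.
Lemma ln_neg x : 0 < x < 1 -> ln x < 0.
Proof. intros. pose proof (ln_increasing x 1 ltac:(lra) ltac:(lra)). rewrite ln_1 in H0. auto. Qed.
Lemma ln_pos' x : 1 < x -> 0 < ln x.
Proof. intros. pose proof (ln_increasing 1 x ltac:(lra) ltac:(lra)). rewrite ln_1 in H0. auto. Qed.
Lemma ln_nonneg x : 1 <= x -> 0 <= ln x.
Proof. intros. pose proof (ln_le 1 x ltac:(lra) ltac:(lra)). rewrite ln_1 in H0. auto. Qed.

Lemma U_derive p z : 0 < p -> 0 < z -> is_derive (U p) z (U' p z).
Proof.
  intros hp hz. unfold U, U'.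
  assert (0 < z / (1 + z)) by (apply Rdiv_lt_0_compat; lra).
  auto_derive.
  - repeat split; try lra; unfold Rdiv in H; auto.
  - unfold Rdiv. field; lra.
Qed.

Lemma w_lt1 z : 0 < z -> z / (1 + z) < 1.
Proof. intros. apply (Rmult_lt_reg_r (1+z)); [lra|]. field_simplify; lra. Qed.

Lemma U_bounds p z : 0 < p -> 0 < z -> 0 < U p z <= 1 / p.
Proof.
  intros hp hz. unfold U.
  assert (0 < z / (1 + z)) by (apply Rdiv_lt_0_compat; lra).
  pose proof (w_lt1 z hz).
  assert (ln (z / (1 + z)) < 0) by (apply ln_neg; lra).
  assert (exp (p * ln (z / (1 + z))) < 1) by (apply exp_lt1; nra).
  pose proof (exp_pos (p * ln (z / (1 + z)))).
  split. apply Rdiv_lt_0_compat; lra.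
  unfold Rdiv. apply Rmult_le_compat_r. left; apply Rinv_0_lt_compat; lra. lra.
Qed.

Lemma U_mono p z1 z2 : 0 < p -> 0 < z1 -> z1 <= z2 -> U p z1 <= U p z2.
Proof.
  intros hp hz hz2. unfold U.
  assert (0 < z1 / (1 + z1)) by (apply Rdiv_lt_0_compat; lra).
  assert (z1 / (1 + z1) <= z2 / (1 + z2)).
  { replace (z1 / (1 + z1)) with (1 - 1/(1+z1)) by (field; lra).
    replace (z2 / (1 + z2)) with (1 - 1/(1+z2)) by (field; lra).
    assert (1 / (1 + z2) <= 1 / (1 + z1)).
    { apply Rmult_le_reg_r with ((1+z1)*(1+z2)). nra. field_simplify; lra. }
    lra. }
  assert (ln (z1 / (1 + z1)) <= ln (z2 / (1 + z2))) by (apply ln_le; auto).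
  assert (exp (p * ln (z1 / (1 + z1))) <= exp (p * ln (z2 / (1 + z2)))).
  { destruct (Req_dec (ln (z1 / (1 + z1))) (ln (z2 / (1 + z2)))) as [E|E].
    rewrite E; lra. left; apply exp_increasing; nra. }
  unfold Rdiv. apply Rmult_le_compat_r. left; apply Rinv_0_lt_compat; lra. lra.
Qed.

Lemma U'_pos p z : 0 < z -> 0 < U' p z.
Proof. intros. unfold U'. apply Rdiv_lt_0_compat. apply exp_pos. nra. Qed.

Lemma U'_bound p z : 0 < p < 1 -> 0 < z <= 1 -> exp ((p - 1) * ln z) <= 4 * U' p z.
Proof.
  intros hp hz. unfold U'.
  rewrite ln_div by lra.
  replace (p * (ln z - ln (1 + z))) with ((p - 1) * ln z + ln z + (- p * ln (1+z))) by ring.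
  rewrite !exp_plus, exp_ln by lra.
  assert (0 <= ln (1+z) <= ln 2).
  { split. apply ln_nonneg; lra. apply ln_le; lra. }
  assert (exp (- ln 2) <= exp (- p * ln (1 + z))).
  { destruct (Req_dec (- ln 2) (- p * ln (1 + z))) as [E|E]. rewrite E; lra.
    left; apply exp_increasing. nra. }
  rewrite exp_Ropp, exp_ln in H0 by lra.
  pose proof (exp_pos ((p - 1) * ln z)).
  set (A := exp ((p - 1) * ln z)) in *.
  set (Bq := exp (- p * ln (1 + z))) in *.
  replace (A * z * Bq / (z * (1 + z))) with (A * Bq / (1 + z)) by (field; lra).
  apply Rmult_le_reg_r with (1+z). lra.
  replace (4 * (A * Bq / (1 + z)) * (1 + z)) with (4 * A * Bq) by (field; lra).
  assert (/2 * A <= Bq * A) by (apply Rmult_le_compat_r; lra).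
  nra.
Qed.

Lemma V_mono p z1 z2 : 0 < p -> z1 <= z2 -> V p z1 <= V p z2.
Proof.
  intros hp hz. unfold V.
  destruct (Rlt_dec 0 z1); destruct (Rlt_dec 0 z2); try lra.
  - apply U_mono; lra.
  - pose proof (U_bounds p z2 hp r).
    destruct (Rlt_dec z1 0); [|lra].
    pose proof (U_bounds p (-z1) hp ltac:(lra)); lra.
  - destruct (Rlt_dec z1 0); destruct (Rlt_dec z2 0).
    + pose proof (U_mono p (-z2) (-z1) hp ltac:(lra) ltac:(lra)); lra.
    + pose proof (U_bounds p (-z1) hp ltac:(lra)); lra.
    + lra.
    + lra.
Qed.

Lemma V_bound p z : 0 < p -> Rabs (V p z) <= 1 / p.
Proof.
  intros hp. assert (0 < 1/p) by (apply Rdiv_lt_0_compat; lra).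
  unfold V. destruct (Rlt_dec 0 z).
  - pose proof (U_bounds p z hp r). rewrite Rabs_right; lra.
  - destruct (Rlt_dec z 0).
    + pose proof (U_bounds p (-z) hp ltac:(lra)). rewrite Rabs_left; lra.
    + rewrite Rabs_R0; lra.
Qed.

Lemma key_pt p g z : 0 < p < 1 -> 0 < g <= 1 -> 0 < z ->
  g * exp ((p - 1) * ln z) <= 4 * U' p z + g.
Proof.
  intros hp hg hz. pose proof (U'_pos p z hz).
  destruct (Rle_dec z 1).
  - pose proof (U'_bound p z hp ltac:(lra)).
    pose proof (exp_pos ((p - 1) * ln z)). nra.
  - assert (0 < ln z) by (apply ln_pos'; lra).
    assert (exp ((p - 1) * ln z) < 1) by (apply exp_lt1; nra).
    nra.
Qed.

Definition Pin (p A1 A2 L1 L2 z0 x y : R) :=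
  A1 * Eprim L1 z0 y + A2 * (4 * V p (y - x) + Eprim L2 z0 y).

Lemma Pin_mono p A1 A2 L1 L2 z0 x y1 y2 : 0 < p -> 0 <= A1 -> 0 <= A2 -> L1 <> 0 -> L2 <> 0 ->
  y1 <= y2 -> Pin p A1 A2 L1 L2 z0 x y1 <= Pin p A1 A2 L1 L2 z0 x y2.
Proof.
  intros. unfold Pin.
  pose proof (Eprim_mono L1 z0 y1 y2 H2 H4).
  pose proof (Eprim_mono L2 z0 y1 y2 H3 H4).
  pose proof (V_mono p (y1 - x) (y2 - x) H ltac:(lra)).
  assert (A1 * Eprim L1 z0 y1 <= A1 * Eprim L1 z0 y2) by (apply Rmult_le_compat_l; lra).
  assert (A2 * (4 * V p (y1 - x) + Eprim L2 z0 y1) <= A2 * (4 * V p (y2 - x) + Eprim L2 z0 y2))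
    by (apply Rmult_le_compat_l; lra).
  lra.
Qed.

Lemma Pin_total p A1 A2 L1 L2 z0 x y1 y2 : 0 < p -> 0 <= A1 -> 0 <= A2 -> L1 <> 0 -> L2 <> 0 ->
  ex L1 z0 y1 <= 1 -> ex L1 z0 y2 <= 1 -> ex L2 z0 y1 <= 1 -> ex L2 z0 y2 <= 1 ->
  Pin p A1 A2 L1 L2 z0 x y2 - Pin p A1 A2 L1 L2 z0 x y1 <= A1 / Rabs L1 + A2 * (8 / p + 1 / Rabs L2).
Proof.
  intros. unfold Pin.
  pose proof (Eprim_total L1 z0 y1 y2 H2 H4 H5).
  pose proof (Eprim_total L2 z0 y1 y2 H3 H6 H7).
  pose proof (V_bound p (y1 - x) H). pose proof (V_bound p (y2 - x) H).
  apply Rabs_le_between in H10. apply Rabs_le_between in H11.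
  assert (A1 * (Eprim L1 z0 y2 - Eprim L1 z0 y1) <= A1 * (1 / Rabs L1)) by (apply Rmult_le_compat_l; lra).
  assert (A2 * (4 * V p (y2 - x) + Eprim L2 z0 y2 - (4 * V p (y1 - x) + Eprim L2 z0 y1)) <= A2 * (8 / p + 1 / Rabs L2)).
  { apply Rmult_le_compat_l; auto.
    replace (8 / p) with (4 * (1/p) + 4 * (1/p)) by (field; lra). lra. }
  unfold Rdiv in *. nra.
Qed.

Lemma U_shift_derive p x y : 0 < p -> x < y -> is_derive (fun y => U p (y - x)) y (U' p (y - x)).
Proof.
  intros hp h.
  replace (U' p (y - x)) with (1 * U' p (y - x)) by ring.
  apply (is_derive_comp (U p) (fun y => y - x)).
  - apply U_derive; lra.
  - auto_derive; auto.
Qed.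

Lemma U_shift_derive2 p x y : 0 < p -> y < x -> is_derive (fun y => - U p (x - y)) y (U' p (x - y)).
Proof.
  intros hp h.
  assert (Hd : is_derive (fun y => U p (x - y)) y (-1 * U' p (x - y))).
  { apply (is_derive_comp (U p) (fun y => x - y)).
    - apply U_derive; lra.
    - auto_derive; auto. }
  apply (is_derive_ext (fun y => (-1) * U p (x - y))). intros; simpl; ring.
  replace (U' p (x - y)) with (-1 * (-1 * U' p (x - y))) by ring.
  apply is_derive_scal. exact Hd.
Qed.

Lemma Pin_mvt p A1 A2 L1 L2 z0 x y1 y2 : 0 < p < 1 -> 0 <= A1 -> 0 <= A2 -> L1 <> 0 -> L2 <> 0 ->
  y1 < y2 -> (x < y1 \/ y2 < x) -> (forall y, y1 <= y <= y2 -> ex L2 z0 y <= 1) ->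
  exists xi, y1 <= xi <= y2 /\
    (A1 * ex L1 z0 xi + A2 * (ex L2 z0 xi * exp ((p - 1) * ln (Rabs (xi - x))))) * (y2 - y1)
      <= Pin p A1 A2 L1 L2 z0 x y2 - Pin p A1 A2 L1 L2 z0 x y1.
Proof.
  intros hp hA1 hA2 hL1 hL2 hy hx hex.
  destruct hx as [hx|hx].
  - set (f := fun y => A1 * Eprim L1 z0 y + A2 * (4 * U p (y - x) + Eprim L2 z0 y)).
    set (f' := fun y => A1 * ex L1 z0 y + A2 * (4 * U' p (y - x) + ex L2 z0 y)).
    destruct (MVT_cor2 f f' y1 y2 hy) as [xi [Hxi Hr]].
    { intros c Hc. apply is_derive_Reals. unfold f, f', Eprim, ex.
      pose proof (U_derive p (c - x) ltac:(lra) ltac:(lra)) as HU.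
      auto_derive.
      - exists (U' p (c - x)). exact HU.
      - replace (Derive (fun x0 : R => U p x0) (c + - x)) with (U' p (c - x))
          by (symmetry; apply is_derive_unique; exact HU).
        unfold Rminus. field; auto. }
    exists xi. split; [lra|].
    assert (E : forall y, x < y -> Pin p A1 A2 L1 L2 z0 x y = f y).
    { intros y hy'. unfold Pin, f, V. destruct (Rlt_dec 0 (y - x)); [auto|lra]. }
    rewrite (E y1), (E y2) by lra. rewrite Hxi. unfold f'.
    rewrite Rabs_right by lra.
    pose proof (key_pt p (ex L2 z0 xi) (xi - x) hp ltac:(split; [apply ex_pos| apply hex; lra]) ltac:(lra)).
    apply Rmult_le_compat_r; [lra|].
    apply Rplus_le_compat_l. apply Rmult_le_compat_l; lra.
  - set (f := fun y => A1 * Eprim L1 z0 y + A2 * (4 * (- U p (x - y)) + Eprim L2 z0 y)).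
    set (f' := fun y => A1 * ex L1 z0 y + A2 * (4 * U' p (x - y) + ex L2 z0 y)).
    destruct (MVT_cor2 f f' y1 y2 hy) as [xi [Hxi Hr]].
    { intros c Hc. apply is_derive_Reals. unfold f, f', Eprim, ex.
      pose proof (U_derive p (x - c) ltac:(lra) ltac:(lra)) as HU.
      auto_derive.
      - exists (U' p (x - c)). exact HU.
      - replace (Derive (fun x0 : R => U p x0) (x + - c)) with (U' p (x - c))
          by (symmetry; apply is_derive_unique; exact HU).
        unfold Rminus. field; auto. }
    exists xi. split; [lra|].
    assert (E : forall y, y < x -> Pin p A1 A2 L1 L2 z0 x y = f y).
    { intros y hy'. unfold Pin, f, V. destruct (Rlt_dec 0 (y - x)); [lra|].
      destruct (Rlt_dec (y - x) 0); [|lra]. replace (- (y - x)) with (x - y) by ring. reflexivity. }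
    rewrite (E y1), (E y2) by lra. rewrite Hxi. unfold f'.
    rewrite Rabs_left by lra. replace (- (xi - x)) with (x - xi) by ring.
    pose proof (key_pt p (ex L2 z0 xi) (x - xi) hp ltac:(split; [apply ex_pos| apply hex; lra]) ltac:(lra)).
    apply Rmult_le_compat_r; [lra|].
    apply Rplus_le_compat_l. apply Rmult_le_compat_l; lra.
Qed.

Lemma main_bound (F : R -> R -> R) (a b c d p K Dc eta Lf Lf2 w0 Lg Lg2 z0 : R) (sgn : bool) :
  a <= b -> c <= d -> 0 < p < 1 -> 0 <= K -> 0 <= Dc -> 0 <= eta ->
  (if sgn then 0 < Lf /\ 0 < Lf2 else Lf < 0 /\ Lf2 < 0) ->
  Lg <> 0 -> Lg2 <> 0 ->
  (forall x, a <= x <= b -> ex Lf w0 x <= 1 /\ ex Lf2 w0 x <= 1) ->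
  (forall y, c <= y <= d -> ex Lg z0 y <= 1 /\ ex Lg2 z0 y <= 1) ->
  (forall x, a <= x <= b -> c <= x <= d -> F x x <= 0) ->
  (forall x y, a <= x <= b -> c <= y <= d -> x <> y ->
     F x y <= K * Dc * ex Lf w0 x * ex Lg z0 y
              + K * eta * ex Lf2 w0 x * (ex Lg2 z0 y * exp ((p - 1) * ln (Rabs (y - x))))) ->
  forall z, grid_lower_sums F a b c d z ->
  z <= K * Dc / Rabs Lg / Rabs Lf + K * eta * (8 / p + 1 / Rabs Lg2) / Rabs Lf2.
Proof.
  intros hab hcd hp hK hD heta hsgn hLg hLg2 hexf hexg Hdiag Hmaj.
  assert (hLf : Lf <> 0) by (destruct sgn; lra).
  assert (hLf2 : Lf2 <> 0) by (destruct sgn; lra).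
  assert (0 < Rabs Lf) by (apply Rabs_pos_lt; auto).
  assert (0 < Rabs Lf2) by (apply Rabs_pos_lt; auto).
  assert (0 < Rabs Lg) by (apply Rabs_pos_lt; auto).
  assert (0 < Rabs Lg2) by (apply Rabs_pos_lt; auto).
  assert (0 < 8 / p + 1 / Rabs Lg2).
  { assert (0 < 8/p) by (apply Rdiv_lt_0_compat; lra).
    assert (0 < 1/Rabs Lg2) by (apply Rdiv_lt_0_compat; lra). lra. }
  set (B1 := 8 / p + 1 / Rabs Lg2) in *.
  apply grid_ub; auto.
  { assert (0 <= K * Dc / Rabs Lg / Rabs Lf).
    { unfold Rdiv. repeat apply Rmult_le_pos; auto; left; apply Rinv_0_lt_compat; auto. }
    assert (0 <= K * eta * B1 / Rabs Lf2).
    { unfold Rdiv. repeat apply Rmult_le_pos; auto; try lra; left; apply Rinv_0_lt_compat; auto. }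
    lra. }
  intros hx hy hhx hhy.
  set (sel := fun x1 : R => if sgn then x1 + hx else x1).
  set (A1 := fun x1 => K * Dc * ex Lf w0 (sel x1)).
  set (A2 := fun x1 => K * eta * ex Lf2 w0 (sel x1)).
  exists (fun x1 y => Pin p (A1 x1) (A2 x1) Lg Lg2 z0 (sel x1) y).
  exists (fun x => K * Dc / Rabs Lg * Eprim Lf w0 x + K * eta * B1 * Eprim Lf2 w0 x).
  assert (hA1 : forall x1, 0 <= A1 x1).
  { intros x1. unfold A1. pose proof (ex_pos Lf w0 (sel x1)). repeat apply Rmult_le_pos; lra. }
  assert (hA2 : forall x1, 0 <= A2 x1).
  { intros x1. unfold A2. pose proof (ex_pos Lf2 w0 (sel x1)). repeat apply Rmult_le_pos; lra. }
  assert (hsel : forall x1, x1 <= sel x1 <= x1 + hx) by (intros x1; unfold sel; destruct sgn; lra).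
  split; [|split].
  - intros x1 y1 mu h1 h2 h3 h4 Hmu.
    destruct (Rle_dec mu 0) as [Hm|Hm].
    + pose proof (Pin_mono p (A1 x1) (A2 x1) Lg Lg2 z0 (sel x1) y1 (y1 + hy) ltac:(lra)
        (hA1 x1) (hA2 x1) hLg hLg2 ltac:(lra)). nra.
    + pose proof (hsel x1).
      destruct (Rlt_dec (sel x1) y1) as [Hs|Hs];
      [|destruct (Rlt_dec (y1 + hy) (sel x1)) as [Hs'|Hs']].
      3:{ exfalso. assert (mu <= F (sel x1) (sel x1)) by (apply Hmu; lra).
          assert (F (sel x1) (sel x1) <= 0) by (apply Hdiag; lra). lra. }
      1,2: destruct (Pin_mvt p (A1 x1) (A2 x1) Lg Lg2 z0 (sel x1) y1 (y1 + hy) hp (hA1 x1) (hA2 x1)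
               hLg hLg2 ltac:(lra) ltac:(lra) ltac:(intros; apply hexg; lra)) as [xi [Hxi Hle]].
      1,2: assert (mu <= F (sel x1) xi) by (apply Hmu; lra).
      1,2: assert (F (sel x1) xi <= A1 x1 * ex Lg z0 xi + A2 x1 * (ex Lg2 z0 xi * exp ((p - 1) * ln (Rabs (xi - sel x1))))) by
             (unfold A1, A2; eapply Rle_trans; [apply Hmaj; lra|]; right; ring).
      1,2: replace (y1 + hy - y1) with hy in Hle by ring.
      1,2: nra.
  - intros x1 h1 h2.
    pose proof (hsel x1).
    pose proof (Pin_total p (A1 x1) (A2 x1) Lg Lg2 z0 (sel x1) c d ltac:(lra) (hA1 x1) (hA2 x1) hLg hLg2
       ltac:(apply hexg; lra) ltac:(apply hexg; lra) ltac:(apply hexg; lra) ltac:(apply hexg; lra)).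
    fold B1 in H5.
    assert (Hs1 : hx * ex Lf w0 (sel x1) <= Eprim Lf w0 (x1 + hx) - Eprim Lf w0 x1).
    { unfold sel; destruct sgn; [apply Eprim_step_pos|apply Eprim_step_neg]; lra. }
    assert (Hs2 : hx * ex Lf2 w0 (sel x1) <= Eprim Lf2 w0 (x1 + hx) - Eprim Lf2 w0 x1).
    { unfold sel; destruct sgn; [apply Eprim_step_pos|apply Eprim_step_neg]; lra. }
    eapply Rle_trans. apply Rmult_le_compat_l. lra. exact H5.
    unfold A1, A2.
    assert (0 <= K * Dc / Rabs Lg).
    { unfold Rdiv. repeat apply Rmult_le_pos; auto; left; apply Rinv_0_lt_compat; auto. }
    assert (0 <= K * eta * B1) by (repeat apply Rmult_le_pos; lra).
    assert (K * Dc / Rabs Lg * (hx * ex Lf w0 (sel x1)) <= K * Dc / Rabs Lg * (Eprim Lf w0 (x1 + hx) - Eprim Lf w0 x1))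
      by (apply Rmult_le_compat_l; auto).
    assert (K * eta * B1 * (hx * ex Lf2 w0 (sel x1)) <= K * eta * B1 * (Eprim Lf2 w0 (x1 + hx) - Eprim Lf2 w0 x1))
      by (apply Rmult_le_compat_l; auto).
    unfold Rdiv in *. nra.
  - pose proof (Eprim_total Lf w0 a b hLf ltac:(apply hexf; lra) ltac:(apply hexf; lra)).
    pose proof (Eprim_total Lf2 w0 a b hLf2 ltac:(apply hexf; lra) ltac:(apply hexf; lra)).
    assert (0 <= K * Dc / Rabs Lg).
    { unfold Rdiv. repeat apply Rmult_le_pos; auto; left; apply Rinv_0_lt_compat; auto. }
    assert (0 <= K * eta * B1) by (repeat apply Rmult_le_pos; lra).
    assert (K * Dc / Rabs Lg * (Eprim Lf w0 b - Eprim Lf w0 a) <= K * Dc / Rabs Lg * (1 / Rabs Lf))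
      by (apply Rmult_le_compat_l; auto).
    assert (K * eta * B1 * (Eprim Lf2 w0 b - Eprim Lf2 w0 a) <= K * eta * B1 * (1 / Rabs Lf2))
      by (apply Rmult_le_compat_l; auto).
    unfold Rdiv in *. nra.
Qed.

Lemma lub_exists (F : R -> R -> R) (a b c d B : R) :
  a <= b -> c <= d ->
  (forall x y, a <= x <= b -> c <= y <= d -> 0 <= F x y) ->
  (forall z, grid_lower_sums F a b c d z -> z <= B) ->
  exists I, is_double_integral_nonneg F a b c d I /\ I <= B.
Proof.
  intros hab hcd Hpos Hub.
  destruct (completeness (grid_lower_sums F a b c d)) as [I HI].
  - exists B. intros z hz. apply Hub; auto.
  - exists 0. exists 1%nat, (fun _ _ => 0). split; [lia|split].
    + intros i j x y hi hj hx hy. apply Hpos.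
      * assert (i = 0%nat) by lia. subst. simpl INR in hx.
        replace (a + 0 * ((b - a) / 1)) with a in hx by field.
        replace (a + 1 * ((b - a) / 1)) with b in hx by field. lra.
      * assert (j = 0%nat) by lia. subst. simpl INR in hy.
        replace (c + 0 * ((d - c) / 1)) with c in hy by field.
        replace (c + 1 * ((d - c) / 1)) with d in hy by field. lra.
    + simpl. ring.
  - exists I. split; auto. destruct HI as [_ HI]. apply HI. intros z hz. apply Hub; auto.
Qed.

Lemma exp_le_mono x y : x <= y -> exp x <= exp y.
Proof. intros. destruct (Req_dec x y). subst; lra. left; apply exp_increasing; lra. Qed.

Lemma maj_core th bt P Q z d : 0 < th -> bt < 0 -> 0 <= P -> 0 <= Q -> 0 < z -> 0 < d ->
  (z < d / 2 -> d / 2 <= P + Q) ->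
  exp (- th * P) * exp (- th * Q) * exp (bt * ln z) <=
  exp (bt * ln (d / 2)) * exp (- th * P) * exp (- th * Q)
  + exp (- th * d / 4) * exp (- (th / 2) * P) * exp (- (th / 2) * Q) * exp (bt * ln z).
Proof.
  intros hth hbt hP hQ hz hd Hc.
  pose proof (exp_pos (- th * P)). pose proof (exp_pos (- th * Q)).
  pose proof (exp_pos (bt * ln z)). pose proof (exp_pos (bt * ln (d/2))).
  pose proof (exp_pos (- th * d / 4)).
  pose proof (exp_pos (- (th / 2) * P)). pose proof (exp_pos (- (th / 2) * Q)).
  destruct (Rlt_dec z (d / 2)) as [Hz|Hz].
  - specialize (Hc Hz).
    assert (E : exp (- th * P) * exp (- th * Q) =
               exp (- (th / 2) * (P + Q)) * (exp (- (th / 2) * P) * exp (- (th / 2) * Q))).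
    { rewrite <- !exp_plus. f_equal. field. }
    assert (exp (- (th / 2) * (P + Q)) <= exp (- th * d / 4)).
    { apply exp_le_mono. replace (- th * d / 4) with (- (th/2) * (d/2)) by field. nra. }
    rewrite E.
    assert (0 < exp (- (th / 2) * P) * exp (- (th / 2) * Q)) by nra.
    assert (exp (- (th / 2) * (P + Q)) * (exp (- (th / 2) * P) * exp (- (th / 2) * Q)) * exp (bt * ln z)
       <= exp (- th * d / 4) * (exp (- (th / 2) * P) * exp (- (th / 2) * Q)) * exp (bt * ln z)).
    { apply Rmult_le_compat_r; [lra|]. apply Rmult_le_compat_r; lra. }
    assert (0 <= exp (bt * ln (d / 2)) * exp (- (th / 2) * (P + Q)) * (exp (- (th / 2) * P) * exp (- (th / 2) * Q))).
    { pose proof (exp_pos (- (th / 2) * (P + Q))). repeat apply Rmult_le_pos; lra. }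
    nra.
  - assert (exp (bt * ln z) <= exp (bt * ln (d / 2))).
    { apply exp_le_mono. assert (ln (d/2) <= ln z) by (apply ln_le; lra). nra. }
    assert (0 < exp (- th * P) * exp (- th * Q)) by nra.
    assert (0 <= exp (- th * d / 4) * exp (- (th / 2) * P) * exp (- (th / 2) * Q) * exp (bt * ln z)).
    { repeat apply Rmult_le_pos; lra. }
    nra.
Qed.

Lemma eta_bound th bt d : 0 < th -> -1 < bt < 0 -> 0 < d ->
  exp (- th * d / 4) <= (1 + 4 / th) * exp (bt * ln d).
Proof.
  intros hth hbt hd.
  assert (H1 : exp (- bt * ln d) <= 1 + d).
  { destruct (Rle_dec d 1).
    - assert (ln d <= 0) by (rewrite <- ln_1; apply ln_le; lra).
      assert (exp (- bt * ln d) <= exp 0) by (apply exp_le_mono; nra). rewrite exp_0 in H0. lra.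
    - assert (0 <= ln d) by (apply ln_nonneg; lra).
      assert (exp (- bt * ln d) <= exp (ln d)) by (apply exp_le_mono; nra). rewrite exp_ln in H0; lra. }
  assert (H2 : 1 + th * d / 4 <= exp (th * d / 4)).
  { destruct (Req_dec (th * d / 4) 0) as [E0|E0]. rewrite E0, exp_0. lra. left; apply exp_ineq1; auto. }
  assert (Hs : exp (- th * d / 4) * exp (th * d / 4) = 1).
  { rewrite <- exp_plus. replace (- th * d / 4 + th * d / 4) with 0 by field. apply exp_0. }
  assert (Ht : exp (bt * ln d) * exp (- bt * ln d) = 1).
  { rewrite <- exp_plus. replace (bt * ln d + - bt * ln d) with 0 by ring. apply exp_0. }
  pose proof (exp_pos (- th * d / 4)). pose proof (exp_pos (bt * ln d)).
  pose proof (exp_pos (- bt * ln d)). pose proof (exp_pos (th * d / 4)).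
  set (e1 := exp (- th * d / 4)) in *. set (e2 := exp (th * d / 4)) in *.
  set (r1 := exp (bt * ln d)) in *. set (r2 := exp (- bt * ln d)) in *.
  (* e1 = 1/e2, r2 = 1/r1 ; want e1 <= (1+4/th) r1, i.e. r2 <= (1+4/th) e2 *)
  assert (r2 <= (1 + 4 / th) * e2).
  { assert ((1 + d) <= (1 + 4/th) * (1 + th * d / 4)).
    { replace ((1 + 4/th) * (1 + th * d / 4)) with (1 + th * d / 4 + 4 / th + d) by (field; lra).
      assert (0 < 4 / th) by (apply Rdiv_lt_0_compat; lra). nra. }
    assert (0 < 1 + 4/th) by (assert (0 < 4 / th) by (apply Rdiv_lt_0_compat; lra); lra).
    nra. }
  assert (0 < 1 + 4/th) by (assert (0 < 4 / th) by (apply Rdiv_lt_0_compat; lra); lra).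
  assert (e1 = e1 * (r1 * r2)) by (rewrite Ht; ring).
  assert (e1 * r1 * r2 <= e1 * r1 * ((1 + 4 / th) * e2)) by (apply Rmult_le_compat_l; nra).
  replace ((1 + 4 / th) * r1) with (e1 * r1 * ((1 + 4 / th) * e2)).
  nra. transitivity ((1 + 4/th) * r1 * (e1 * e2)). ring. rewrite Hs; ring.
Qed.

Lemma kernel_diag H u : sfbm_kernel H u u = 0.
Proof. unfold sfbm_kernel. destruct (Req_EM_T u u); [auto|congruence]. Qed.

Lemma kernel_le H u v : 0 <= H * (2 * H - 1) -> u <> v ->
  sfbm_kernel H u v <= H * (2 * H - 1) * exp ((2 * H - 2) * ln (Rabs (v - u))).
Proof.
  intros hK huv. unfold sfbm_kernel. destruct (Req_EM_T u v); [congruence|].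
  unfold Rpower. rewrite Rabs_minus_sym.
  pose proof (exp_pos ((2 * H - 2) * ln (u + v))).
  apply Rmult_le_compat_l; auto. lra.
Qed.

Lemma kernel_nonneg H u v : 1/2 < H < 1 -> 0 <= u -> 0 <= v -> 0 <= sfbm_kernel H u v.
Proof.
  intros hH hu hv. unfold sfbm_kernel. destruct (Req_EM_T u v); [lra|].
  apply Rmult_le_pos. nra.
  unfold Rpower.
  assert (0 < Rabs (u - v)) by (apply Rabs_pos_lt; lra).
  assert (Rabs (u - v) <= u + v) by (unfold Rabs; destruct (Rcase_abs (u - v)); lra).
  assert (ln (Rabs (u - v)) <= ln (u + v)) by (apply ln_le; auto).
  assert (exp ((2 * H - 2) * ln (u + v)) <= exp ((2 * H - 2) * ln (Rabs (u - v)))) by (apply exp_le_mono; nra).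
  lra.
Qed.

Lemma ex_le1 L z0 y : 0 <= L * (y - z0) -> ex L z0 y <= 1.
Proof. intros. unfold ex. rewrite <- exp_0. apply exp_le_mono. lra. Qed.

Lemma B_le (K th p d : R) : 0 <= K -> 0 < th -> 0 < p < 1 -> 0 < d ->
  K * exp ((p - 1) * ln (d / 2)) / th / th + K * exp (- th * d / 4) * (8 / p + 1 / (th / 2)) / (th / 2)
  <= (K * exp (- (p - 1) * ln 2) / th / th + K * (1 + 4 / th) * (8 / p + 1 / (th / 2)) / (th / 2))
     * exp ((p - 1) * ln d).
Proof.
  intros hK hth hp hd.
  assert (E : exp ((p - 1) * ln (d / 2)) = exp (- (p - 1) * ln 2) * exp ((p - 1) * ln d)).
  { rewrite <- exp_plus. f_equal. unfold Rdiv. rewrite ln_mult by lra. rewrite ln_Rinv by lra. ring. }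
  rewrite E.
  pose proof (eta_bound th (p - 1) d hth ltac:(lra) hd).
  assert (0 < 8 / p + 1 / (th / 2)).
  { assert (0 < 8/p) by (apply Rdiv_lt_0_compat; lra).
    assert (0 < 1/(th/2)) by (apply Rdiv_lt_0_compat; lra). lra. }
  set (B1 := 8 / p + 1 / (th / 2)) in *.
  assert (K * exp (- th * d / 4) * B1 / (th / 2) <= K * ((1 + 4 / th) * exp ((p - 1) * ln d)) * B1 / (th / 2)).
  { unfold Rdiv. apply Rmult_le_compat_r. left; apply Rinv_0_lt_compat; lra.
    apply Rmult_le_compat_r. lra. apply Rmult_le_compat_l; lra. }
  unfold Rdiv in *. nra.
Qed.

Theorem lemma6p1 (H theta : R) (hH : 1/2 < H < 1) (htheta : 0 < theta) :
  exists C : R,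
    forall T s t : R, 0 <= s <= T -> 0 <= t <= T -> s <> t ->
      (exists I, sfbm_wiener_cov H (fun x => exp (- theta * (x - s))) s T
                                   (fun y => exp (- theta * (y - t))) t T I
                 /\ I <= C * Rpower (Rabs (t - s)) (2 * H - 2)) /\
      (exists I, sfbm_wiener_cov H (fun u => exp (- theta * (t - u))) 0 t
                                   (fun v => exp (- theta * (s - v))) 0 s I
                 /\ I <= C * Rpower (Rabs (t - s)) (2 * H - 2)).
Proof.
  set (p := 2 * H - 1). set (K := H * (2 * H - 1)).
  assert (hp : 0 < p < 1) by (unfold p; lra).
  assert (hK : 0 <= K) by (unfold K; nra).
  exists (K * exp (- (p - 1) * ln 2) / theta / theta
          + K * (1 + 4 / theta) * (8 / p + 1 / (theta / 2)) / (theta / 2)).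
  intros T s t hs ht hst.
  set (d := Rabs (t - s)).
  assert (hd : 0 < d) by (apply Rabs_pos_lt; lra).
  assert (Hbt : 2 * H - 2 = p - 1) by (unfold p; ring).
  unfold Rpower. rewrite Hbt.
  pose proof (B_le K theta p d hK htheta hp hd) as HB.
  assert (Rth : Rabs theta = theta) by (apply Rabs_right; lra).
  assert (Rth' : Rabs (- theta) = theta) by (rewrite Rabs_Ropp; apply Rabs_right; lra).
  assert (Rth2 : Rabs (theta / 2) = theta / 2) by (apply Rabs_right; lra).
  assert (hDc : 0 <= exp ((p - 1) * ln (d / 2))) by (left; apply exp_pos).
  assert (heta : 0 <= exp (- theta * d / 4)) by (left; apply exp_pos).
  split.
  - unfold sfbm_wiener_cov.
    set (F := fun x y => exp (- theta * (x - s)) * exp (- theta * (y - t)) * sfbm_kernel H x y).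
    assert (Hub : forall z, grid_lower_sums F s T t T z ->
      z <= K * exp ((p - 1) * ln (d / 2)) / Rabs theta / Rabs theta
         + K * exp (- theta * d / 4) * (8 / p + 1 / Rabs (theta / 2)) / Rabs (theta / 2)).
    2:{ assert (Hpos : forall x y, s <= x <= T -> t <= y <= T -> 0 <= F x y).
      { intros x y hx hy. unfold F. pose proof (exp_pos (- theta * (x - s))). pose proof (exp_pos (- theta * (y - t))).
        pose proof (kernel_nonneg H x y hH ltac:(lra) ltac:(lra)).
        apply Rmult_le_pos; [|auto]. nra. }
      destruct (lub_exists F s T t T _ ltac:(lra) ltac:(lra) Hpos Hub) as [I [HI HIB]].
      exists I. split; [exact HI|].
        eapply Rle_trans; [exact HIB|]. rewrite Rth, Rth2. exact HB. }
    apply (main_bound F s T t T p K _ _ theta (theta/2) s theta (theta/2) t true).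
    all: try lra.
    + intros x hx. split; apply ex_le1; nra.
    + intros y hy. split; apply ex_le1; nra.
    + intros x _ _. unfold F. rewrite kernel_diag. lra.
    + intros x y hx hy hxy.
      pose proof (kernel_le H x y hK hxy). rewrite Hbt in H0.
      pose proof (exp_pos (- theta * (x - s))). pose proof (exp_pos (- theta * (y - t))).
      assert (exp (- theta * (x - s)) * exp (- theta * (y - t)) * sfbm_kernel H x y
              <= exp (- theta * (x - s)) * exp (- theta * (y - t)) * (K * exp ((p - 1) * ln (Rabs (y - x))))).
      { apply Rmult_le_compat_l; [nra|auto]. }
      pose proof (maj_core theta (p - 1) (x - s) (y - t) (Rabs (y - x)) d htheta ltac:(lra) ltac:(lra) ltac:(lra)
         ltac:(apply Rabs_pos_lt; lra) hd) as Hc.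
      assert (Hc' : Rabs (y - x) < d / 2 -> d / 2 <= x - s + (y - t)).
      { unfold d; intros; unfold Rabs in *; destruct (Rcase_abs (y - x)); destruct (Rcase_abs (t - s)); lra. }
      specialize (Hc Hc').
      unfold ex, F. eapply Rle_trans. exact H3.
      apply Rmult_le_compat_l with (r := K) in Hc; [|auto].
      replace (- (theta / 2) * (x - s)) with (- (theta / 2) * (x - s)) in Hc by ring.
      eapply Rle_trans; [|eapply Rle_trans; [exact Hc|right; ring]]. right; ring.
  - unfold sfbm_wiener_cov.
    set (F := fun x y => exp (- theta * (t - x)) * exp (- theta * (s - y)) * sfbm_kernel H x y).
    assert (Hub : forall z, grid_lower_sums F 0 t 0 s z ->
      z <= K * exp ((p - 1) * ln (d / 2)) / Rabs (- theta) / Rabs (- theta)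
         + K * exp (- theta * d / 4) * (8 / p + 1 / Rabs (- (theta / 2))) / Rabs (- (theta / 2))).
    2:{ assert (Hpos : forall x y, 0 <= x <= t -> 0 <= y <= s -> 0 <= F x y).
      { intros x y hx hy. unfold F. pose proof (exp_pos (- theta * (t - x))). pose proof (exp_pos (- theta * (s - y))).
        pose proof (kernel_nonneg H x y hH ltac:(lra) ltac:(lra)).
        apply Rmult_le_pos; [|auto]. nra. }
      destruct (lub_exists F 0 t 0 s _ ltac:(lra) ltac:(lra) Hpos Hub) as [I [HI HIB]].
      exists I. split; [exact HI|].
        eapply Rle_trans; [exact HIB|]. rewrite Rth', Rabs_Ropp, Rth2. exact HB. }
    apply (main_bound F 0 t 0 s p K _ _ (-theta) (-(theta/2)) t (-theta) (-(theta/2)) s false).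
    all: try lra.
    + intros x hx. split; apply ex_le1; nra.
    + intros y hy. split; apply ex_le1; nra.
    + intros x _ _. unfold F. rewrite kernel_diag. lra.
    + intros x y hx hy hxy.
      pose proof (kernel_le H x y hK hxy). rewrite Hbt in H0.
      pose proof (exp_pos (- theta * (t - x))). pose proof (exp_pos (- theta * (s - y))).
      assert (exp (- theta * (t - x)) * exp (- theta * (s - y)) * sfbm_kernel H x y
              <= exp (- theta * (t - x)) * exp (- theta * (s - y)) * (K * exp ((p - 1) * ln (Rabs (y - x))))).
      { apply Rmult_le_compat_l; [nra|auto]. }
      pose proof (maj_core theta (p - 1) (t - x) (s - y) (Rabs (y - x)) d htheta ltac:(lra) ltac:(lra) ltac:(lra)
         ltac:(apply Rabs_pos_lt; lra) hd) as Hc.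
      assert (Hc' : Rabs (y - x) < d / 2 -> d / 2 <= t - x + (s - y)).
      { unfold d; intros; unfold Rabs in *; destruct (Rcase_abs (y - x)); destruct (Rcase_abs (t - s)); lra. }
      specialize (Hc Hc').
      unfold ex, F. eapply Rle_trans. exact H3.
      apply Rmult_le_compat_l with (r := K) in Hc; [|auto].
      replace (- - theta * (x - t)) with (- theta * (t - x)) by ring.
      replace (- - theta * (y - s)) with (- theta * (s - y)) by ring.
      replace (- - (theta / 2) * (x - t)) with (- (theta / 2) * (t - x)) by ring.
      replace (- - (theta / 2) * (y - s)) with (- (theta / 2) * (s - y)) by ring.
      eapply Rle_trans; [|eapply Rle_trans; [exact Hc|right; ring]]. right; ring.
Qed.
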